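(* Let $\alpha>1$ and let $A=1+\left(\frac{2}{2\alpha-1}\right)^{2\alpha-1}\alpha^\alpha(\alpha-1)^{\alpha-1}$. Then the norm of the Ces\`aro operator on the $\alpha$-Bloch space satisfies $$\|\mathcal{C}\|_{\mathcal{B}^\alpha\to\mathcal{B}^\alpha}\le\begin{cases}\max\left\{A,\dfrac{2^\alpha}{\alpha-1}\right\}, & 1<\alpha\le 2,\\[1em] \max\left\{A,\,2^\alpha\dfrac{2^\alpha-\alpha-1}{(\alpha-1)^2}\right\}, & \alpha>2.\end{cases}$$
   Context: $\mathbb{D}$ is the open unit disc and $H(\mathbb{D})$ the space of analytic functions on $\mathbb{D}$. For $f(z)=\sum_{k\ge0}a_kz^k\in H(\mathbb{D})$ the Ces\`aro operator is $\mathcal{C}(f)(z)=\sum_{n\ge0}\Big(\frac{1}{n+1}\sum_{k=0}^n a_k\Big)z^n=\int_0^1\frac{f(tz)}{1-tz}\,dt$. For $\alpha>0$ the $\alpha$-Bloch space $\mathcal{B}^\alpha$ consists of $f\in H(\mathbb{D})$ with $\sup_{z\in\mathbb{D}}(1-|z|^2)^\alpha|f'(z)|<\infty$, normed by $\|f\|_{\mathcal{B}^\alpha}=|f(0)|+\sup_{z\in\mathbb{D}}(1-|z|^2)^\alpha|f'(z)|$. Operator norms are $\|\mathcal{C}\|_{X\to Y}=\sup\{\|\mathcal{C}f\|_Y:\|f\|_X\le 1\}$. *)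

(* Defs.v *)
From Stdlib Require Import Reals.
From Coquelicot Require Import Coquelicot.
Open Scope R_scope.

(* An analytic function f(z) = sum_k a_k z^k on the unit disc is represented
   by its Taylor coefficient sequence a : nat -> C; it belongs to H(D) iff the
   power series converges at every point of the open unit disc. *)
Definition in_HD (a : nat -> C) : Prop :=
  forall z : C, Cmod z < 1 -> ex_pseries a z.

Definition dcoef (a : nat -> C) : nat -> C :=
  fun n => Cmult (RtoC (INR (S n))) (a (S n)).

Definition cesaro (a : nat -> C) : nat -> C :=
  fun n => Cmult (RtoC (/ INR (S n))) (sum_n a n).

Definition bloch_sup (alpha : R) (a : nat -> C) : Rbar :=
  Rbar_lub (fun r : Rbar => exists z : C, Cmod z < 1 /\
     exists w : C, is_pseries (dcoef a) z w /\
       r = Finite (Rpower (1 - Cmod z ^ 2) alpha * Cmod w)).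

(* ||f||_{B^alpha} = |f(0)| + sup ... (+oo when f is not in B^alpha) *)
Definition bloch_norm (alpha : R) (a : nat -> C) : Rbar :=
  Rbar_plus (Finite (Cmod (a O))) (bloch_sup alpha a).

Definition in_bloch (alpha : R) (a : nat -> C) : Prop :=
  in_HD a /\ is_finite (bloch_norm alpha a).

Definition cesaro_opnorm (alpha : R) : Rbar :=
  Rbar_lub (fun r : Rbar => exists a : nat -> C,
     in_bloch alpha a /\ Rbar_le (bloch_norm alpha a) (Finite 1) /\
     r = bloch_norm alpha (cesaro a)).

Definition constA (alpha : R) : R :=
  1 + Rpower (2 / (2 * alpha - 1)) (2 * alpha - 1)
      * Rpower alpha alpha * Rpower (alpha - 1) (alpha - 1).

(* Main.v *)
Require Import Defs.
From Stdlib Require Import Reals Lra Psatz Lia Arith.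
From Coquelicot Require Import Coquelicot.
Open Scope R_scope.


Lemma mvt_dec (f df : R -> R) (a b : R) : a <= b ->
  (forall x, a <= x <= b -> is_derive f x (df x)) ->
  (forall x, a <= x <= b -> df x <= 0) -> f b <= f a.
Proof.
  intros Hab Hd Hn.
  destruct (MVT_gen f a b df) as [c [Hc Heq]].
  - intros x Hx. apply Hd. rewrite Rmin_left in Hx by lra. rewrite Rmax_right in Hx by lra. lra.
  - intros x Hx. rewrite Rmin_left in Hx by lra. rewrite Rmax_right in Hx by lra.
    apply continuity_pt_filterlim. apply (ex_derive_continuous (K:=R_AbsRing) (V:=R_NormedModule)). eexists. apply Hd. lra.
  - rewrite Rmin_left in Hc by lra. rewrite Rmax_right in Hc by lra.
    assert (df c * (b - a) <= 0). { apply Rmult_le_0_r. apply Hn; lra. lra. }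
    lra.
Qed.

Lemma ln_le_sub1 y : 0 < y -> ln y <= y - 1.
Proof. intros. pose proof (exp_ineq1_le (ln y)). rewrite exp_ln in H0; lra. Qed.

Lemma rp_pos x e : 0 < Rpower x e.
Proof. unfold Rpower. apply exp_pos. Qed.

Lemma exp_mono a b : a <= b -> exp a <= exp b.
Proof. intros [H|H]. left. apply exp_increasing. auto. subst. lra. Qed.

Lemma ln_nonpos x : 0 < x <= 1 -> ln x <= 0.
Proof. intros. rewrite <- ln_1. destruct (Req_dec x 1). subst. lra. left. apply ln_increasing; lra. Qed.

Lemma rp_le1 x e : 0 < x <= 1 -> 0 <= e -> Rpower x e <= 1.
Proof.
  intros Hx He. unfold Rpower. rewrite <- exp_0. apply exp_mono.
  pose proof (ln_nonpos x Hx). nra.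
Qed.

Lemma rp_ge1 x e : 0 < x <= 1 -> e <= 0 -> 1 <= Rpower x e.
Proof.
  intros Hx He. unfold Rpower. rewrite <- exp_0. apply exp_mono.
  pose proof (ln_nonpos x Hx). nra.
Qed.

Lemma rp_one c : Rpower 1 c = 1.
Proof. unfold Rpower. rewrite ln_1, Rmult_0_r. apply exp_0. Qed.

Lemma is_derive_rp y e : 0 < y -> is_derive (fun x => Rpower x e) y (e * Rpower y (e - 1)).
Proof. intros. apply is_derive_Reals. apply derivable_pt_lim_power. auto. Qed.

Lemma is_derive_minusR (f g : R -> R) x a b : is_derive f x a -> is_derive g x b -> is_derive (fun t => f t - g t) x (a - b).
Proof. intros. exact (is_derive_minus f g x a b H H0). Qed.
Lemma is_derive_plusR (f g : R -> R) x a b : is_derive f x a -> is_derive g x b -> is_derive (fun t => f t + g t) x (a + b).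
Proof. intros. exact (is_derive_plus f g x a b H H0). Qed.
Lemma is_derive_eqv (f : R -> R) x a b : is_derive f x a -> a = b -> is_derive f x b.
Proof. intros; subst; auto. Qed.

Lemma ber1 x c : 0 < x <= 1 -> 0 <= c <= 1 -> Rpower x c <= 1 + c * (x - 1).
Proof.
  intros Hx Hc.
  pose (k := fun y => 1 + c * (y - 1) - Rpower y c).
  assert (k 1 <= k x).
  { apply (mvt_dec k (fun y => c - c * Rpower y (c - 1))). lra.
    - intros y Hy. unfold k.
      assert (is_derive (fun y => 1 + c * (y - 1)) y c).
      { auto_derive. auto. ring. }
      pose proof (is_derive_rp y c ltac:(lra)).
      apply (is_derive_minusR _ _ _ _ _ H H0).
    - intros y Hy. pose proof (rp_ge1 y (c - 1) ltac:(lra) ltac:(lra)). nra. }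
  unfold k in H. rewrite rp_one in H. lra.
Qed.

Lemma ber2 x d : 0 < x <= 1 -> 1 <= d -> 1 + d * (x - 1) <= Rpower x d.
Proof.
  intros Hx Hc.
  pose (k := fun y => Rpower y d - 1 - d * (y - 1)).
  assert (k 1 <= k x).
  { apply (mvt_dec k (fun y => d * Rpower y (d - 1) - d)). lra.
    - intros y Hy. unfold k.
      assert (is_derive (fun y => 1 + d * (y - 1)) y d).
      { auto_derive. auto. ring. }
      pose proof (is_derive_rp y d ltac:(lra)).
      assert (Hm := is_derive_minusR _ _ _ _ _ H0 H).
      eapply is_derive_ext. 2: exact Hm. intros t. simpl. ring.
    - intros y Hy. pose proof (rp_le1 y (d - 1) ltac:(lra) ltac:(lra)). nra. }
  unfold k in H. rewrite rp_one in H. lra.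
Qed.

Lemma constK_bound a r : 1 < a -> 0 <= r < 1 ->
  Rpower (1 + r) a * Rpower (1 - r) (a - 1) <=
  Rpower (2 / (2 * a - 1)) (2 * a - 1) * Rpower a a * Rpower (a - 1) (a - 1).
Proof.
  intros Ha Hr. unfold Rpower. rewrite <- !exp_plus. apply exp_mono.
  set (y1 := (1 + r) * (2 * a - 1) / (2 * a)).
  set (y2 := (1 - r) * (2 * a - 1) / (2 * a - 2)).
  assert (Hy1 : 0 < y1). { unfold y1. apply Rdiv_lt_0_compat; nra. }
  assert (Hy2 : 0 < y2). { unfold y2. apply Rdiv_lt_0_compat; nra. }
  pose proof (ln_le_sub1 y1 Hy1). pose proof (ln_le_sub1 y2 Hy2).
  assert (E1 : ln y1 = ln (1 + r) + ln (2 * a - 1) - ln 2 - ln a).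
  { unfold y1, Rdiv. rewrite ln_mult, ln_mult, ln_Rinv, ln_mult; try nra.
    apply Rinv_0_lt_compat; nra. }
  assert (E2 : ln y2 = ln (1 - r) + ln (2 * a - 1) - ln 2 - ln (a - 1)).
  { unfold y2, Rdiv. replace (2 * a - 2) with (2 * (a - 1)) by ring.
    rewrite ln_mult, ln_mult, ln_Rinv, ln_mult; try nra.
    apply Rinv_0_lt_compat; nra. }
  assert (E3 : ln (2 / (2 * a - 1)) = ln 2 - ln (2 * a - 1)).
  { unfold Rdiv. rewrite ln_mult, ln_Rinv; try nra. apply Rinv_0_lt_compat; nra. }
  rewrite E3.
  assert (a * (y1 - 1) + (a - 1) * (y2 - 1) = 0).
  { unfold y1, y2. field. lra. }
  assert (a * ln y1 + (a - 1) * ln y2 <= 0) by nra.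
  rewrite E1, E2 in H2. nra.
Qed.

Lemma KI u b : 0 < u < 1 -> 0 < b ->
  1 - b + b * u <= Rpower u (b - 1) * (2 * b * (1 - u) ^ 2 + u).
Proof.
  intros Hu Hb.
  assert (HR : 0 < 2 * b * (1 - u) ^ 2 + u) by (pose proof (pow2_ge_0 (1 - u)); nra).
  destruct (Rle_lt_dec b 1) as [H1|H1].
  - pose proof (ber1 u (1 - b) ltac:(lra) ltac:(lra)) as Hq.
    set (q := 1 + (1 - b) * (u - 1)) in *.
    assert (Hq0 : 0 < q) by (unfold q; nra).
    assert (Hp : Rpower u (b - 1) = / Rpower u (1 - b)).
    { rewrite <- Rpower_Ropp. f_equal. ring. }
    assert (Hpos := rp_pos u (1 - b)).
    assert (/ q <= Rpower u (b - 1)).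
    { rewrite Hp. apply Rinv_le_contravar; auto. }
    assert ((1 - b + b * u) * q <= 2 * b * (1 - u) ^ 2 + u).
    { assert (E : 2 * b * (1 - u) ^ 2 + u - (1 - b + b * u) * q = b * (1 + b) * (1 - u) ^ 2) by (unfold q; ring).
      assert (0 <= b * (1 + b) * (1 - u) ^ 2). { apply Rmult_le_pos. nra. apply pow2_ge_0. }
      lra. }
    apply Rle_trans with (/ q * (2 * b * (1 - u) ^ 2 + u)).
    + apply (Rmult_le_reg_l q); auto. rewrite <- Rmult_assoc, Rinv_r by lra. lra.
    + apply Rmult_le_compat_r; lra.
  - destruct (Rle_lt_dec b 2) as [H2|H2].
    + pose proof (ber1 u (2 - b) ltac:(lra) ltac:(lra)) as Hq.
      set (q := 1 + (2 - b) * (u - 1)) in *.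
      assert (Hq0 : 0 < q) by (unfold q; nra).
      assert (Hp : Rpower u (b - 1) * Rpower u (2 - b) = u).
      { rewrite <- Rpower_plus. replace (b - 1 + (2 - b)) with 1 by ring. apply Rpower_1. lra. }
      assert (Hpos := rp_pos u (2 - b)). assert (Hpos' := rp_pos u (b - 1)).
      assert (u / q <= Rpower u (b - 1)).
      { unfold Rdiv. apply (Rmult_le_reg_r q); auto. rewrite Rmult_assoc, Rinv_l by lra.
        rewrite <- Hp at 1. nra. }
      assert ((1 - b + b * u) * q <= u * (2 * b * (1 - u) ^ 2 + u)).
      { assert (E : u * (2 * b * (1 - u) ^ 2 + u) - (1 - b + b * u) * q = (1 - u) ^ 2 * ((1 - b) ^ 2 + 2 * b * u)) by (unfold q; ring).
        assert (0 <= (1 - u) ^ 2 * ((1 - b) ^ 2 + 2 * b * u)). { apply Rmult_le_pos. apply pow2_ge_0. pose proof (pow2_ge_0 (1 - b)). nra. }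
        lra. }
      apply Rle_trans with (u / q * (2 * b * (1 - u) ^ 2 + u)).
      * unfold Rdiv. apply (Rmult_le_reg_l q); auto.
        replace (q * (u * / q * (2 * b * (1 - u) ^ 2 + u))) with (u * (2 * b * (1 - u) ^ 2 + u)) by (field; lra). lra.
      * apply Rmult_le_compat_r; lra.
    + pose proof (ber2 u (b - 1) ltac:(lra) ltac:(lra)) as Hq.
      destruct (Rle_lt_dec (1 - b + b * u) 0).
      * pose proof (rp_pos u (b - 1)). nra.
      * apply Rle_trans with ((1 + (b - 1) * (u - 1)) * (2 * b * (1 - u) ^ 2 + u)).
        -- set (y := 1 - u). replace u with (1 - y) in * by (unfold y; ring).
           assert (b * y < 1) by nra.
           assert (0 <= y) by lra.
           assert (2 * b * (b - 1) * y <= 2 * (b - 1)) by nra.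
           nra.
        -- apply Rmult_le_compat_r; lra.
Qed.

Lemma rp_lt1 x e : 0 < x < 1 -> 0 < e -> Rpower x e < 1.
Proof.
  intros. unfold Rpower. rewrite <- exp_0. apply exp_increasing.
  assert (ln x < 0). { rewrite <- ln_1. apply ln_increasing; lra. } nra.
Qed.

Definition Lf (b u : R) := ln (1 - Rpower u b) - ln (1 - u) + (b + 1) * ln (1 - u / 2).

Lemma Lf_deriv b u : 0 < b -> 0 < u < 1 ->
  is_derive (Lf b) u (- (b * Rpower u (b - 1)) / (1 - Rpower u b) + 1 / (1 - u) - (b + 1) / (2 - u)).
Proof.
  intros Hb Hu. pose proof (rp_lt1 u b Hu Hb).
  unfold Lf. auto_derive.
  - repeat split; try lra. eexists. apply is_derive_rp. lra.
  - replace (Derive (fun x : R => Rpower x b) u) with (b * Rpower u (b - 1)) by (symmetry; apply is_derive_unique; apply is_derive_rp; lra). field. lra.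
Qed.

Lemma Lf_deriv_nonpos b u : 0 < b -> 0 < u < 1 ->
  - (b * Rpower u (b - 1)) / (1 - Rpower u b) + 1 / (1 - u) - (b + 1) / (2 - u) <= 0.
Proof.
  intros Hb Hu. pose proof (rp_lt1 u b Hu Hb).
  assert (Hp : Rpower u b = u * Rpower u (b - 1)).
  { replace b with (1 + (b - 1)) at 1 by ring. rewrite Rpower_plus, Rpower_1; lra. }
  pose proof (KI u b Hu Hb). set (p := Rpower u (b - 1)) in *.
  rewrite Hp in *.
  assert (0 < 1 - u * p) by lra.
  assert (E : - (b * p) / (1 - u * p) + 1 / (1 - u) - (b + 1) / (2 - u) =
     ((1 - b + b * u) - p * (2 * b * (1 - u) ^ 2 + u)) / ((1 - u * p) * (1 - u) * (2 - u))).
  { field. repeat split; lra. }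
  rewrite E. unfold Rdiv.
  assert (0 < / ((1 - u * p) * (1 - u) * (2 - u))).
  { apply Rinv_0_lt_compat. apply Rmult_lt_0_compat. apply Rmult_lt_0_compat; lra. lra. }
  nra.
Qed.

Lemma Lf_small b e : 0 < b -> 0 < e <= 1/2 -> Lf b e <= 2 * e.
Proof.
  intros Hb He. pose proof (rp_lt1 e b ltac:(lra) Hb). pose proof (rp_pos e b).
  unfold Lf.
  assert (ln (1 - Rpower e b) <= 0) by (apply ln_nonpos; lra).
  assert (ln (1 - e / 2) <= 0) by (apply ln_nonpos; lra).
  assert (- ln (1 - e) <= 2 * e).
  { rewrite <- ln_Rinv by lra. pose proof (ln_le_sub1 (/ (1 - e))).
    assert (/ (1 - e) - 1 <= 2 * e).
    { replace (/ (1 - e) - 1) with (e / (1 - e)) by (field; lra).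
      apply Rle_div_l; nra. }
    assert (0 < / (1 - e)) by (apply Rinv_0_lt_compat; lra). lra. }
  nra.
Qed.

Lemma Lf_nonpos b u : 0 < b -> 0 < u < 1 -> Lf b u <= 0.
Proof.
  intros Hb Hu.
  assert (Hm : forall e, 0 < e <= u -> Lf b u <= Lf b e).
  { intros e He. apply (mvt_dec (Lf b) (fun u => - (b * Rpower u (b - 1)) / (1 - Rpower u b) + 1 / (1 - u) - (b + 1) / (2 - u))).
    lra. intros x Hx. apply Lf_deriv; lra. intros x Hx. apply Lf_deriv_nonpos; lra. }
  destruct (Rle_lt_dec (Lf b u) 0) as [H|H]; auto.
  set (e := Rmin (Rmin u (1/2)) (Lf b u / 4)).
  assert (0 < e). { unfold e. repeat apply Rmin_pos; lra. }
  assert (e <= u). { unfold e. eapply Rle_trans. apply Rmin_l. apply Rmin_l. }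
  assert (e <= 1/2). { unfold e. eapply Rle_trans. apply Rmin_l. apply Rmin_r. }
  assert (e <= Lf b u / 4). { unfold e. apply Rmin_r. }
  pose proof (Hm e ltac:(lra)). pose proof (Lf_small b e Hb ltac:(lra)). lra.
Qed.

Lemma A2 u b : 0 < u < 1 -> 0 < b ->
  Rpower (1 - u / 2) (b + 1) * (1 - Rpower u b) <= 1 - u.
Proof.
  intros Hu Hb. pose proof (Lf_nonpos b u Hb Hu). unfold Lf in H.
  pose proof (rp_lt1 u b Hu Hb).
  rewrite <- (exp_ln (1 - u)) by lra. rewrite <- (exp_ln (1 - Rpower u b)) by lra.
  unfold Rpower at 1. rewrite <- exp_plus. apply exp_mono. lra.
Qed.

Lemma Cmod_pow_n (z : C) n : Cmod (@pow_n C_AbsRing z n) = Cmod z ^ n.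
Proof.
  induction n; simpl. apply Cmod_1.
  change (Cmod (Cmult z (@pow_n C_AbsRing z n)) = Cmod z * Cmod z ^ n).
  rewrite Cmod_mult, IHn. auto.
Qed.

Lemma sum_n_nonneg (u : nat -> R) n : (forall i, 0 <= u i) -> 0 <= sum_n u n.
Proof.
  intros Hu. induction n. rewrite sum_O. auto.
  rewrite sum_Sn. change (plus (sum_n u n) (u (S n))) with (sum_n u n + u (S n)).
  pose proof (Hu (S n)). lra.
Qed.

Lemma sum_n_le_term (u : nat -> R) n k : (forall i, 0 <= u i) -> (k <= n)%nat -> u k <= sum_n u n.
Proof.
  intros Hu Hk. induction n.
  - inversion Hk. rewrite sum_O. lra.
  - rewrite sum_Sn. change (plus (sum_n u n) (u (S n))) with (sum_n u n + u (S n)).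
    destruct (Nat.eq_dec k (S n)). subst.
    assert (0 <= sum_n u n) by (apply sum_n_nonneg; auto). lra.
    assert (k <= n)%nat by lia. specialize (IHn H). pose proof (Hu (S n)). lra.
Qed.

Lemma bounded_terms (u : nat -> C) : ex_series u -> exists M, forall n, Cmod (u n) <= M.
Proof.
  intros [l Hl]. unfold is_series in Hl.
  assert (Hb : eventually (fun n => ball l 1 (sum_n u n))).
  { apply Hl. apply (locally_ball l (mkposreal 1 Rlt_0_1)). }
  destruct Hb as [N HN].
  set (c := @norm_factor C_AbsRing C_NormedModule * 1).
  assert (Hc : forall n, (N <= n)%nat -> Cmod (Cminus (sum_n u n) l) < c).
  { intros n Hn. exact (norm_compat2 (V := C_NormedModule) l (sum_n u n) (mkposreal 1 Rlt_0_1) (HN n Hn)). }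
  exists (2 * c + sum_n (fun k => Cmod (u k)) N).
  intros n. 
  assert (0 <= sum_n (fun k => Cmod (u k)) N) by (apply sum_n_nonneg; intros; apply Cmod_ge_0).
  assert (0 <= c). { pose proof (Hc N (le_n N)). pose proof (Cmod_ge_0 (Cminus (sum_n u N) l)). lra. }
  destruct (le_lt_dec n N).
  - pose proof (sum_n_le_term (fun k => Cmod (u k)) N n (fun i => Cmod_ge_0 _) l0). simpl in H1. lra.
  - destruct n. lia.
    assert (E : u (S n) = Cminus (Cminus (sum_n u (S n)) l) (Cminus (sum_n u n) l)).
    { rewrite sum_Sn. change (plus (sum_n u n) (u (S n))) with (Cplus (sum_n u n) (u (S n))). ring. }
    rewrite E. eapply Rle_trans. 
    unfold Cminus at 1. eapply Rle_trans. apply Cmod_triangle. rewrite Cmod_opp. apply Rle_refl.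
    pose proof (Hc (S n) ltac:(lia)). pose proof (Hc n ltac:(lia)). lra.
Qed.

Lemma growth q : 0 <= q < 1 -> exists K, forall n, INR (S n) * q ^ n <= K.
Proof.
  intros Hq. destruct (Req_dec q 0) as [H0|H0].
  - subst. exists 1. intros [|n]. simpl. lra. simpl. rewrite Rmult_0_l, Rmult_0_r. lra.
  - set (d := / q - 1).
    assert (Hd : 0 < d). { unfold d. assert (1 < / q). { rewrite <- Rinv_1. apply Rinv_lt_contravar; lra. } lra. }
    assert (Hb : forall n, 1 + INR n * d <= (/ q) ^ n).
    { induction n. simpl. lra. rewrite S_INR. simpl.
      replace (/ q) with (1 + d) by (unfold d; ring). 
      replace (/ q) with (1 + d) in IHn by (unfold d; ring). 
      assert (0 <= INR n) by apply pos_INR. nra. }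
    exists (1 + / d). intros n. specialize (Hb n).
    assert (Hqn : q ^ n = / (/ q) ^ n). { rewrite pow_inv. rewrite Rinv_inv. auto. }
    rewrite Hqn. rewrite S_INR.
    assert (0 <= INR n) by apply pos_INR.
    assert (0 < (/ q) ^ n) by nra.
    apply Rle_trans with ((INR n + 1) / (1 + INR n * d)).
    + unfold Rdiv. apply Rmult_le_compat_l. lra. apply Rinv_le_contravar; nra.
    + apply Rle_div_l. nra. 
      assert (/ d * d = 1) by (field; lra). nra.
Qed.

Definition sg (b : nat -> C) := forall rho, 0 < rho < 1 -> exists M, forall n, Cmod (b n) * rho ^ n <= M.

Lemma sg_of_HD a : in_HD a -> sg a.
Proof.
  intros Ha rho Hr.
  assert (Hc : Cmod (RtoC rho) < 1). { rewrite Cmod_R, Rabs_pos_eq; lra. }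
  destruct (bounded_terms _ (Ha _ Hc)) as [M HM].
  exists M. intros n. specialize (HM n).
  change (Cmod (Cmult (@pow_n C_AbsRing (RtoC rho) n) (a n)) <= M) in HM.
  rewrite Cmod_mult, Cmod_pow_n, Cmod_R, Rabs_pos_eq in HM by lra. lra.
Qed.

Lemma sg_M_nonneg b rho M : (forall n, Cmod (b n) * rho ^ n <= M) -> 0 <= M.
Proof. intros H. specialize (H O). simpl in H. pose proof (Cmod_ge_0 (b O)). lra. Qed.

Lemma sg_abs b w : sg b -> Cmod w < 1 -> ex_series (fun n => Cmod (b n) * Cmod w ^ n).
Proof.
  intros Hb Hw. set (rho := (1 + Cmod w) / 2). pose proof (Cmod_ge_0 w).
  destruct (Hb rho ltac:(unfold rho; lra)) as [M HM].
  set (q := Cmod w / rho).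
  assert (Hq : 0 <= q < 1). { unfold q, rho. split. apply Rdiv_le_0_compat; lra. apply Rlt_div_l; lra. }
  apply (ex_series_le (K := R_AbsRing) (V := R_CompleteNormedModule) _ (fun n => M * q ^ n)).
  - intros n. change (Rabs (Cmod (b n) * Cmod w ^ n) <= M * q ^ n).
    rewrite Rabs_pos_eq by (apply Rmult_le_pos; [apply Cmod_ge_0 | apply pow_le; auto]).
    replace (Cmod w) with (rho * q) by (unfold q, rho; field; lra).
    rewrite Rpow_mult_distr, <- Rmult_assoc. apply Rmult_le_compat_r. apply pow_le; lra. apply HM.
  - apply (ex_series_scal (K := R_AbsRing) (V := R_NormedModule) M (fun n => q ^ n)).
    eexists. apply is_series_geom. rewrite Rabs_pos_eq; lra.
Qed.

Lemma sg_ex b w : sg b -> Cmod w < 1 -> ex_pseries b w.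
Proof.
  intros Hb Hw. unfold ex_pseries.
  apply (ex_series_le (K := C_AbsRing) (V := C_CompleteNormedModule) _ (fun n => Cmod (b n) * Cmod w ^ n)).
  2: exact (sg_abs b w Hb Hw).
  intros n. change (Cmod (Cmult (@pow_n C_AbsRing w n) (b n)) <= Cmod (b n) * Cmod w ^ n).
  rewrite Cmod_mult, Cmod_pow_n. lra.
Qed.

Lemma sg_le b c K : sg c -> 0 <= K -> (forall n, Cmod (b n) <= K * Cmod (c n)) -> sg b.
Proof.
  intros Hc HK Hbc rho Hr. destruct (Hc rho Hr) as [M HM]. exists (K * M). intros n.
  specialize (HM n). specialize (Hbc n). pose proof (pow_le rho n ltac:(lra)).
  apply Rle_trans with (K * Cmod (c n) * rho ^ n). apply Rmult_le_compat_r; auto.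
  rewrite Rmult_assoc. apply Rmult_le_compat_l; auto.
Qed.

Lemma Cmod_INR n : Cmod (RtoC (INR n)) = INR n.
Proof. rewrite Cmod_R. apply Rabs_pos_eq, pos_INR. Qed.

Lemma sg_dcoef a : sg a -> sg (dcoef a).
Proof.
  intros Ha rho Hr. set (r' := (1 + rho) / 2).
  destruct (Ha r' ltac:(unfold r'; lra)) as [M HM].
  pose proof (sg_M_nonneg _ _ _ HM).
  set (q := rho / r').
  assert (Hq : 0 <= q < 1). { unfold q, r'. split. apply Rdiv_le_0_compat; lra. apply Rlt_div_l; lra. }
  destruct (growth q Hq) as [K HK].
  exists (K * M / r'). intros n. unfold dcoef. rewrite Cmod_mult, Cmod_INR.
  specialize (HM (S n)). specialize (HK n).
  replace rho with (r' * q) by (unfold q, r'; field; lra).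
  rewrite Rpow_mult_distr.
  assert (E : INR (S n) * Cmod (a (S n)) * (r' ^ n * q ^ n) = (INR (S n) * q ^ n) * (Cmod (a (S n)) * r' ^ S n) / r').
  { simpl. field. unfold r'; lra. }
  rewrite E. unfold Rdiv. apply Rmult_le_compat_r. left; apply Rinv_0_lt_compat; unfold r'; lra.
  apply Rmult_le_compat; auto.
  apply Rmult_le_pos. apply pos_INR. apply pow_le; lra.
  apply Rmult_le_pos. apply Cmod_ge_0. apply pow_le; unfold r'; lra.
Qed.

Lemma sg_psum a : sg a -> sg (fun n => sum_n a n).
Proof.
  intros Ha rho Hr. set (r' := (1 + rho) / 2).
  destruct (Ha r' ltac:(unfold r'; lra)) as [M HM].
  pose proof (sg_M_nonneg _ _ _ HM).
  assert (Hi : forall n, Cmod (sum_n a n) * r' ^ n <= INR (S n) * M).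
  { induction n.
    - rewrite sum_O. specialize (HM O). simpl in *. lra.
    - rewrite sum_Sn. change (plus (sum_n a n) (a (S n))) with (Cplus (sum_n a n) (a (S n))).
      eapply Rle_trans. apply Rmult_le_compat_r. apply pow_le; unfold r'; lra. apply Cmod_triangle.
      rewrite Rmult_plus_distr_r. specialize (HM (S n)).
      assert (Cmod (sum_n a n) * r' ^ S n <= Cmod (sum_n a n) * r' ^ n).
      { simpl. rewrite <- Rmult_assoc. rewrite (Rmult_comm _ r'). rewrite Rmult_assoc.
        pose proof (Cmod_ge_0 (sum_n a n)). pose proof (pow_le r' n ltac:(unfold r'; lra)).
        assert (0 <= Cmod (sum_n a n) * r' ^ n) by (apply Rmult_le_pos; auto).
        unfold r' at 1. nra. }
      rewrite (S_INR (S n)). lra. }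
  set (q := rho / r').
  assert (Hq : 0 <= q < 1). { unfold q, r'. split. apply Rdiv_le_0_compat; lra. apply Rlt_div_l; lra. }
  destruct (growth q Hq) as [K HK].
  exists (K * M). intros n. specialize (Hi n). specialize (HK n).
  replace rho with (r' * q) by (unfold q, r'; field; lra).
  rewrite Rpow_mult_distr, <- Rmult_assoc.
  apply Rle_trans with (INR (S n) * M * q ^ n).
  apply Rmult_le_compat_r; auto. apply pow_le; lra.
  replace (INR (S n) * M * q ^ n) with (INR (S n) * q ^ n * M) by ring.
  apply Rmult_le_compat_r; auto.
Qed.

Definition shift2 (e : nat -> C) : nat -> C :=
  fun n => match n with O => RtoC 0 | S O => RtoC 0 | S (S m) => e m end.

Lemma sg_shift2 e : sg e -> sg (shift2 e).
Proof.
  intros He rho Hr. destruct (He rho Hr) as [M HM]. pose proof (sg_M_nonneg _ _ _ HM).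
  exists M. intros [|[|m]]; simpl; try (rewrite Cmod_0; lra).
  specialize (HM m). pose proof (Cmod_ge_0 (e m)). pose proof (pow_le rho m ltac:(lra)).
  assert (rho * (rho * rho ^ m) <= rho ^ m).
  { rewrite <- Rmult_assoc. rewrite <- (Rmult_1_l (rho ^ m)) at 2. apply Rmult_le_compat_r; auto. nra. }
  eapply Rle_trans. apply Rmult_le_compat_l. apply Cmod_ge_0. exact H2. auto.
Qed.

Lemma cont_reC (v l : C) : filterlim (fun x : C => Re (Cmult v x)) (locally l) (locally (Re (Cmult v l))).
Proof.
  destruct l as [l1 l2].
  assert (H1 : continuous (T := prod_UniformSpace R_UniformSpace R_UniformSpace) (U := R_UniformSpace) (fun x : R * R => Re v * fst x) (l1, l2)).
  { apply (continuous_mult (K := R_AbsRing) (fun _ => Re v) fst). apply continuous_const. apply continuous_fst. }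
  assert (H2 : continuous (T := prod_UniformSpace R_UniformSpace R_UniformSpace) (U := R_UniformSpace) (fun x : R * R => Im v * snd x) (l1, l2)).
  { apply (continuous_mult (K := R_AbsRing) (fun _ => Im v) snd). apply continuous_const. apply continuous_snd. }
  pose proof (continuous_minus (K := R_AbsRing) (V := R_NormedModule) _ _ _ H1 H2) as H.
  unfold continuous in H.
  replace (Re (Cmult v (l1, l2))) with (Re v * fst (l1, l2) - Im v * snd (l1, l2)).
  eapply filterlim_ext. 2: exact H. intros [x1 x2]. destruct v. unfold Re, Im, Cmult; simpl. 
  unfold minus, plus, opp; simpl. ring.
  destruct v. unfold Re, Im, Cmult; simpl. ring.
Qed.

Lemma Re_plus (x y : C) : Re (Cplus x y) = Re x + Re y.
Proof. destruct x, y. reflexivity. Qed.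

Lemma sum_re (u : nat -> C) v n : sum_n (fun k => Re (Cmult v (u k))) n = Re (Cmult v (sum_n u n)).
Proof.
  induction n. rewrite !sum_O. auto.
  rewrite !sum_Sn. change (plus (sum_n (fun k => Re (Cmult v (u k))) n) (Re (Cmult v (u (S n)))))
    with (sum_n (fun k => Re (Cmult v (u k))) n + Re (Cmult v (u (S n)))).
  change (plus (sum_n u n) (u (S n))) with (Cplus (sum_n u n) (u (S n))).
  rewrite Cmult_plus_distr_l, Re_plus, IHn. auto.
Qed.

Lemma pow_n_RtoC_mult (t : R) (z : C) k :
  @pow_n C_AbsRing (Cmult (RtoC t) z) k = Cmult (RtoC (t ^ k)) (@pow_n C_AbsRing z k).
Proof.
  induction k. simpl. change (@one C_AbsRing) with (RtoC 1). apply injective_projections; simpl; ring.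
  change (@pow_n C_AbsRing (Cmult (RtoC t) z) (S k)) with (Cmult (Cmult (RtoC t) z) (@pow_n C_AbsRing (Cmult (RtoC t) z) k)).
  change (@pow_n C_AbsRing z (S k)) with (Cmult z (@pow_n C_AbsRing z k)).
  rewrite IHk. change (t ^ S k) with (t * t ^ k). rewrite RtoC_mult. match goal with |- ?a = ?b => change (@eq C a b) end. ring.
Qed.

Lemma Re_scal (v X : C) (s : R) : Re (Cmult v (Cmult (RtoC s) X)) = s * Re (Cmult v X).
Proof. destruct v, X. unfold Re, Cmult, RtoC; simpl. ring. Qed.

Definition reseq (v : C) (b : nat -> C) (z : C) : nat -> R :=
  fun n => Re (Cmult v (Cmult (b n) (@pow_n C_AbsRing z n))).

Lemma link b z v t l : is_pseries b (Cmult (RtoC t) z) l ->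
  is_pseries (K := R_AbsRing) (V := R_NormedModule) (reseq v b z) t (Re (Cmult v l)).
Proof.
  unfold is_pseries, is_series. intros H.
  pose proof (filterlim_comp _ _ _ _ _ _ _ _ H (cont_reC v l)) as H2.
  eapply filterlim_ext. 2: exact H2. intros n. cbv beta. rewrite <- sum_re. symmetry.
  apply sum_n_ext. intros k. 
  change (scal (pow_n t k) (reseq v b z k)) with (t ^ k * reseq v b z k).
  change (t ^ k * reseq v b z k = Re (Cmult v (Cmult (@pow_n C_AbsRing (Cmult (RtoC t) z) k) (b k)))).
  rewrite pow_n_RtoC_mult. unfold reseq.
  rewrite <- Re_scal. f_equal. f_equal. ring.
Qed.

Lemma reseq_bound v b z n : Rabs (reseq v b z n) <= Cmod v * (Cmod (b n) * Cmod z ^ n).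
Proof.
  unfold reseq. eapply Rle_trans. apply re_le_Cmod. rewrite !Cmod_mult, Cmod_pow_n. lra.
Qed.

Lemma reseq_radius v b z : sg b -> Cmod z < 1 -> Rbar_lt 1 (CV_radius (reseq v b z)).
Proof.
  intros Hb Hz. pose proof (Cmod_ge_0 z).
  set (t0 := 2 / (1 + Cmod z)).
  assert (Ht0 : 1 < t0). { unfold t0. apply Rlt_div_r; lra. }
  assert (Hq : Cmod (RtoC (t0 * Cmod z)) < 1).
  { rewrite Cmod_R, Rabs_pos_eq. unfold t0. unfold Rdiv. 
    apply (Rmult_lt_reg_r (1 + Cmod z)). lra. field_simplify; lra.
    apply Rmult_le_pos; lra. }
  assert (HD : CV_disk (reseq v b z) t0).
  { unfold CV_disk. 
    apply (ex_series_le (K := R_AbsRing) (V := R_CompleteNormedModule) _ (fun n => Cmod v * (Cmod (b n) * Cmod (RtoC (t0 * Cmod z)) ^ n))).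
    - intros n. change (Rabs (Rabs (reseq v b z n * t0 ^ n)) <= Cmod v * (Cmod (b n) * Cmod (RtoC (t0 * Cmod z)) ^ n)).
      rewrite Rabs_Rabsolu, Rabs_mult, Cmod_R, (Rabs_pos_eq (t0 * Cmod z)) by (apply Rmult_le_pos; lra).
      rewrite (Rabs_pos_eq (t0 ^ n)) by (apply pow_le; lra).
      eapply Rle_trans. apply Rmult_le_compat_r. apply pow_le; lra. apply reseq_bound.
      rewrite Rpow_mult_distr. 
      assert (0 <= Cmod v) by apply Cmod_ge_0. assert (0 <= Cmod (b n)) by apply Cmod_ge_0.
      assert (0 <= t0 ^ n) by (apply pow_le; lra). assert (0 <= Cmod z ^ n) by (apply pow_le; lra).
      apply Req_le. ring.
    - apply (ex_series_scal (K := R_AbsRing) (V := R_NormedModule) (Cmod v) _).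
      apply sg_abs; auto. }
  unfold CV_radius. destruct (Lub_Rbar_correct (CV_disk (reseq v b z))) as [Hub _].
  specialize (Hub t0 HD). destruct (Lub_Rbar (CV_disk (reseq v b z))); simpl in *; auto; lra.
Qed.

Lemma PS_derive_reseq v b z : forall n, PS_derive (reseq v b z) n = reseq (Cmult v z) (dcoef b) z n.
Proof.
  intros n. unfold PS_derive, reseq, dcoef.
  change (@pow_n C_AbsRing z (S n)) with (Cmult z (@pow_n C_AbsRing z n)).
  rewrite <- Re_scal. f_equal. ring.
Qed.

Lemma ray_bound (b : nat -> C) (z v l : C) (G dG : R -> R) :
  sg b -> Cmod z < 1 -> is_pseries b z l ->
  (forall t, 0 <= t <= 1 -> is_derive G t (dG t)) ->
  (forall t w, 0 <= t <= 1 -> is_pseries (dcoef b) (Cmult (RtoC t) z) w -> Re (Cmult (Cmult v z) w) <= dG t) ->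
  Re (Cmult v (Cminus l (b O))) <= G 1 - G 0.
Proof.
  intros Hb Hz Hl HG Hd.
  set (c := reseq v b z).
  assert (Hr : Rbar_lt 1 (CV_radius c)) by (apply reseq_radius; auto).
  assert (Htz : forall t, 0 <= t <= 1 -> Cmod (Cmult (RtoC t) z) < 1).
  { intros t Ht. rewrite Cmod_mult, Cmod_R, Rabs_pos_eq by lra. pose proof (Cmod_ge_0 z). nra. }
  assert (Hrad : forall t, 0 <= t <= 1 -> Rbar_lt (Rabs t) (CV_radius c)).
  { intros t Ht. rewrite Rabs_pos_eq by lra. destruct (CV_radius c); simpl in *; auto; lra. }
  set (dphi := fun t => PSeries (PS_derive c) t).
  assert (Hmv : PSeries c 1 - G 1 <= PSeries c 0 - G 0).
  { apply (mvt_dec (fun t => PSeries c t - G t) (fun t => dphi t - dG t)). lra.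
    - intros t Ht. apply is_derive_minusR. apply is_derive_PSeries. auto. auto.
    - intros t Ht. destruct (sg_ex (dcoef b) (Cmult (RtoC t) z) (sg_dcoef b Hb) (Htz t Ht)) as [w Hw].
      pose proof (Hd t w Ht Hw).
      assert (dphi t = Re (Cmult (Cmult v z) w)).
      { unfold dphi. apply is_pseries_unique.
        eapply is_pseries_ext. intros n. symmetry. apply PS_derive_reseq.
        apply link. auto. }
      lra. }
  rewrite PSeries_0 in Hmv.
  assert (PSeries c 1 = Re (Cmult v l)).
  { apply is_pseries_unique. apply link.
    replace (Cmult (RtoC 1) z) with z by ring. auto. }
  assert (c O = Re (Cmult v (b O))).
  { unfold c, reseq. f_equal. f_equal. change (@pow_n C_AbsRing z 0) with (RtoC 1). ring. }
  unfold Cminus. rewrite Cmult_plus_distr_l, Re_plus.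
  replace (Re (Cmult v (Copp (b O)))) with (- Re (Cmult v (b O))).
  lra. destruct v, (b O). unfold Re, Cmult, Copp; simpl. ring.
Qed.

Lemma ps_unique (b : nat -> C) (z l1 l2 : C) : is_pseries b z l1 -> is_pseries b z l2 -> l1 = l2.
Proof.
  intros H1 H2. unfold is_pseries, is_series in *.
  exact (filterlim_locally_unique (K := C_AbsRing) (V := C_NormedModule) _ l1 l2 H1 H2).
Qed.

Lemma norm_via_re (d : C) (B : R) : (forall v, Cmod v <= 1 -> Re (Cmult v d) <= B) -> Cmod d <= B.
Proof.
  intros H. destruct (Req_dec (Cmod d) 0) as [H0|H0].
  - specialize (H (RtoC 0) ltac:(rewrite Cmod_0; lra)). rewrite H0.
    replace (Re (Cmult (RtoC 0) d)) with 0 in H. auto. destruct d. unfold Re, Cmult, RtoC; simpl. ring.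
  - pose proof (Cmod_ge_0 d).
    set (v := Cmult (RtoC (/ Cmod d)) (Cconj d)).
    assert (Hv : Cmod v <= 1).
    { unfold v. rewrite Cmod_mult, Cmod_conj, Cmod_R, Rabs_pos_eq. right. field. auto.
      left. apply Rinv_0_lt_compat. lra. }
    specialize (H v Hv).
    assert (Re (Cmult v d) = Cmod d).
    { unfold v. replace (Cmult (Cmult (RtoC (/ Cmod d)) (Cconj d)) d) with (Cmult (RtoC (/ Cmod d)) (Cmult d (Cconj d))) by ring.
      rewrite <- Cmod2_conj. rewrite <- RtoC_mult. simpl. field. auto. }
    lra.
Qed.

Lemma re_le_mod3 (v z X : C) : Cmod v <= 1 -> Re (Cmult (Cmult v z) X) <= Cmod z * Cmod X.
Proof.
  intros Hv. eapply Rle_trans. apply Rle_abs. eapply Rle_trans. apply re_le_Cmod.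
  rewrite !Cmod_mult. pose proof (Cmod_ge_0 z). pose proof (Cmod_ge_0 X).
  assert (0 <= Cmod z * Cmod X) by (apply Rmult_le_pos; auto). pose proof (Cmod_ge_0 v). nra.
Qed.

Lemma rp_lin_deriv (r e t : R) : 0 < 1 - t * r ->
  is_derive (fun t => Rpower (1 - t * r) e) t (e * Rpower (1 - t * r) (e - 1) * (- r)).
Proof.
  intros H.
  assert (Hl : is_derive (fun t => 1 - t * r) t (- r)). { auto_derive. auto. ring. }
  pose proof (is_derive_comp (fun x => Rpower x e) (fun t => 1 - t * r) t _ _ (is_derive_rp (1 - t * r) e H) Hl).
  eapply is_derive_eqv. exact H0. change (scal (- r) (e * Rpower (1 - t * r) (e - 1)) = e * Rpower (1 - t * r) (e - 1) * - r). unfold scal; simpl; unfold mult; simpl. ring.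
Qed.

Lemma Cmod_tz (t : R) (z : C) : 0 <= t -> Cmod (Cmult (RtoC t) z) = t * Cmod z.
Proof. intros. rewrite Cmod_mult, Cmod_R, Rabs_pos_eq; auto. Qed.

Lemma fprime_bound al a S v w : 1 < al -> Cmod v < 1 ->
  (forall v w, Cmod v < 1 -> is_pseries (dcoef a) v w -> Rpower (1 - Cmod v ^ 2) al * Cmod w <= S) ->
  is_pseries (dcoef a) v w -> Cmod w <= S * Rpower (1 - Cmod v) (- al).
Proof.
  intros Hal Hv HS Hw. specialize (HS v w Hv Hw). pose proof (Cmod_ge_0 v). pose proof (Cmod_ge_0 w).
  assert (Rpower (1 - Cmod v) al <= Rpower (1 - Cmod v ^ 2) al).
  { apply Rle_Rpower_l. lra. split. lra. nra. }
  pose proof (rp_pos (1 - Cmod v) al).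
  rewrite Rpower_Ropp. apply (Rmult_le_reg_l (Rpower (1 - Cmod v) al)); auto.
  replace (Rpower (1 - Cmod v) al * (S * / Rpower (1 - Cmod v) al)) with S by (field; lra).
  nra.
Qed.

Lemma f_bound al a S w fw : 1 < al -> 0 <= S -> sg a -> Cmod w < 1 ->
  (forall v w, Cmod v < 1 -> is_pseries (dcoef a) v w -> Rpower (1 - Cmod v ^ 2) al * Cmod w <= S) ->
  is_pseries a w fw -> Cmod (Cminus fw (a O)) <= S / (al - 1) * (Rpower (1 - Cmod w) (1 - al) - 1).
Proof.
  intros Hal HS0 Ha Hw HS Hf. set (r := Cmod w). pose proof (Cmod_ge_0 w).
  apply norm_via_re. intros v Hv.
  pose proof (ray_bound a w v fw (fun t => S / (al - 1) * Rpower (1 - t * r) (1 - al))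
    (fun t => S * r * Rpower (1 - t * r) (- al)) Ha Hw Hf) as HR.
  cbv beta in HR. rewrite Rmult_1_l, Rmult_0_l, Rminus_0_r, rp_one in HR.
  replace (S / (al - 1) * (Rpower (1 - r) (1 - al) - 1)) with
    (S / (al - 1) * Rpower (1 - r) (1 - al) - S / (al - 1) * 1) by ring.
  apply HR.
  - intros t Ht. 
    assert (0 < 1 - t * r) by (unfold r in *; nra).
    pose proof (rp_lin_deriv r (1 - al) t H0).
    pose proof (is_derive_scal _ t (S / (al - 1)) _ H1) as H2.
    eapply is_derive_eqv. exact H2. replace (1 - al - 1) with (- al) by ring.
    match goal with |- ?x = ?y => change (@eq R x y) end. field. lra.
  - intros t X Ht HX. eapply Rle_trans. apply re_le_mod3; auto.
    assert (Htw : t * r < 1). { unfold r. nra. }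
    assert (Htw' : Cmod (Cmult (RtoC t) w) < 1). { rewrite Cmod_tz by lra. auto. }
    pose proof (fprime_bound al a S _ X Hal Htw' HS HX).
    rewrite Cmod_tz in H0 by lra. fold r in H0. pose proof (Cmod_ge_0 X).
    replace (S * r * Rpower (1 - t * r) (- al)) with (r * (S * Rpower (1 - t * r) (- al))) by ring.
    apply Rmult_le_compat_l; auto.
Qed.

Definition Hs (a : nat -> C) : nat -> C := fun n => sum_n a n.

Lemma Hs_S a n : Hs a (S n) = Cplus (Hs a n) (a (S n)).
Proof. unfold Hs. rewrite sum_Sn. reflexivity. Qed.

Lemma Hs_0 a : Hs a O = a O.
Proof. unfold Hs. rewrite sum_O. reflexivity. Qed.

Lemma ident1 a w fw hw : is_pseries a w fw -> is_pseries (Hs a) w hw ->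
  Cmult (Cminus (RtoC 1) w) hw = fw.
Proof.
  intros Hf Hh.
  pose proof (is_pseries_minus _ _ _ _ _ Hh (is_pseries_incr_1 _ _ _ Hh)) as H.
  assert (H2 : is_pseries a w (plus hw (opp (scal w hw)))).
  { eapply is_pseries_ext. 2: exact H. intros [|n]; unfold PS_minus, PS_incr_1; simpl.
    - rewrite Hs_0. change (Cplus (a O) (Copp (RtoC 0)) = a O). ring.
    - rewrite Hs_S. change (Cplus (Cplus (Hs a n) (a (S n))) (Copp (Hs a n)) = a (S n)). ring. }
  rewrite (ps_unique _ _ _ _ Hf H2). change (Cmult (Cminus (RtoC 1) w) hw = Cplus hw (Copp (Cmult w hw))). ring.
Qed.

Lemma ident2 a w f1 hw Y : is_pseries (dcoef a) w f1 -> is_pseries (Hs a) w hw ->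
  is_pseries (dcoef (Hs a)) w Y -> Cmult (Cminus (RtoC 1) w) Y = Cplus f1 hw.
Proof.
  intros Hf Hh HY.
  pose proof (is_pseries_minus _ _ _ _ _ HY (is_pseries_incr_1 _ _ _ HY)) as H.
  pose proof (is_pseries_plus _ _ _ _ _ Hf Hh) as H1.
  assert (E : forall n, PS_minus (dcoef (Hs a)) (PS_incr_1 (dcoef (Hs a))) n = PS_plus (dcoef a) (Hs a) n).
  { intros [|n]; unfold PS_minus, PS_plus, PS_incr_1, dcoef; simpl.
    - rewrite Hs_S, Hs_0. change (Cplus (Cmult (RtoC 1) (Cplus (a O) (a 1%nat))) (Copp (RtoC 0)) = Cplus (Cmult (RtoC 1) (a 1%nat)) (a O)). ring.
    - rewrite (Hs_S a (S n)). 
      change (Cplus (Cmult (RtoC (INR (S (S n)))) (Cplus (Hs a (S n)) (a (S (S n))))) (Copp (Cmult (RtoC (INR (S n))) (Hs a (S n)))) =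
              Cplus (Cmult (RtoC (INR (S (S n)))) (a (S (S n)))) (Hs a (S n))).
      rewrite (S_INR (S n)). rewrite RtoC_plus. ring. }
  pose proof (is_pseries_ext _ _ _ _ E H) as H2.
  transitivity (@plus C_NormedModule Y (opp (scal w Y))).
  change (@eq C (Cmult (Cminus (RtoC 1) w) Y) (Cplus Y (Copp (Cmult w Y)))). ring.
  exact (ps_unique _ _ _ _ H2 H1).
Qed.

Lemma ident3 a : forall m, dcoef (shift2 (dcoef (cesaro a))) m = PS_incr_1 (dcoef (Hs a)) m.
Proof.
  intros [|k]; unfold dcoef, shift2, PS_incr_1, cesaro; simpl.
  - change (Cmult (RtoC 1) (RtoC 0) = RtoC 0). ring.
  - fold (Hs a (S k)). 
    assert (INR (S (S k)) <> 0) by (apply not_0_INR; lia).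
    change (sum_n a (S k)) with (Hs a (S k)).
    transitivity (Cmult (Cmult (RtoC (INR (S (S k)))) (RtoC (/ INR (S (S k))))) (Cmult (RtoC (INR (S k))) (Hs a (S k)))).
    change (@eq C (Cmult (RtoC (INR (S (S k)))) (Cmult (RtoC (INR (S k))) (Cmult (RtoC (/ INR (S (S k)))) (Hs a (S k)))))
     (Cmult (Cmult (RtoC (INR (S (S k)))) (RtoC (/ INR (S (S k))))) (Cmult (RtoC (INR (S k))) (Hs a (S k))))). ring.
    rewrite <- RtoC_mult, Rinv_r by auto. change (@eq C (Cmult (RtoC 1) (Cmult (RtoC (INR (S k))) (Hs a (S k)))) (Cmult (RtoC (INR (S k))) (Hs a (S k)))). ring.
Qed.

Lemma Cmod_1_minus (w : C) : 1 - Cmod w <= Cmod (Cminus (RtoC 1) w).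
Proof.
  pose proof (Cmod_triangle (Cminus (RtoC 1) w) w).
  replace (Cplus (Cminus (RtoC 1) w) w) with (RtoC 1) in H by ring. rewrite Cmod_1 in H. lra.
Qed.

Lemma hprime_bound al a S w Y : 1 < al -> 0 <= S -> sg a -> Cmod w < 1 ->
  (forall v w, Cmod v < 1 -> is_pseries (dcoef a) v w -> Rpower (1 - Cmod v ^ 2) al * Cmod w <= S) ->
  is_pseries (dcoef (Hs a)) w Y ->
  (1 - Cmod w) ^ 2 * Cmod Y <=
    S * al / (al - 1) * (1 - Cmod w) * Rpower (1 - Cmod w) (- al) + (Cmod (a O) - S / (al - 1)).
Proof.
  intros Hal HS0 Ha Hw HS HY.
  destruct (sg_ex _ _ (sg_dcoef _ Ha) Hw) as [f1 Hf1].
  destruct (sg_ex _ _ (sg_psum _ Ha) Hw) as [hw Hhw].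
  destruct (sg_ex _ _ Ha Hw) as [fw Hfw].
  pose proof (ident1 _ _ _ _ Hfw Hhw) as I1.
  pose proof (ident2 _ _ _ _ _ Hf1 Hhw HY) as I2.
  pose proof (fprime_bound al a S w f1 Hal Hw HS Hf1) as B1.
  pose proof (f_bound al a S w fw Hal HS0 Ha Hw HS Hfw) as B2.
  set (d := 1 - Cmod w) in *. set (P := Rpower d (- al)) in *.
  assert (Hd : 0 < d) by (unfold d; lra).
  assert (HdP : Rpower d (1 - al) = d * P).
  { unfold P. replace (1 - al) with (1 + - al) by ring. rewrite Rpower_plus, Rpower_1; auto. }
  rewrite HdP in B2.
  pose proof (Cmod_1_minus w) as Hm. fold d in Hm.
  set (m := Cmod (Cminus (RtoC 1) w)) in *.
  assert (E1 : m * Cmod Y <= Cmod f1 + Cmod hw).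
  { unfold m. rewrite <- Cmod_mult, I2. apply Cmod_triangle. }
  assert (E2 : m * Cmod hw = Cmod fw). { unfold m. rewrite <- Cmod_mult, I1. auto. }
  assert (E3 : Cmod fw <= Cmod (a O) + Cmod (Cminus fw (a O))).
  { replace fw with (Cplus (a O) (Cminus fw (a O))) at 1 by ring. apply Cmod_triangle. }
  pose proof (Cmod_ge_0 Y). pose proof (Cmod_ge_0 hw).
  assert (d * Cmod Y <= Cmod f1 + Cmod hw) by nra.
  assert (d * Cmod hw <= Cmod fw) by nra.
  assert (d * d * Cmod Y <= d * Cmod f1 + d * Cmod hw) by nra.
  assert (d * Cmod f1 <= d * (S * P)) by (apply Rmult_le_compat_l; lra).
  assert (Eq : S * al / (al - 1) * d * P + (Cmod (a O) - S / (al - 1)) =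
     d * (S * P) + (Cmod (a O) + S / (al - 1) * (d * P - 1))) by (field; lra).
  rewrite Eq. simpl. lra.
Qed.

Lemma rp_m1 d e : 0 < d -> Rpower d (e - 1) = Rpower d e / d.
Proof.
  intros. replace (e - 1) with (e + - (1)) by ring. rewrite Rpower_plus, Rpower_Ropp, Rpower_1; auto.
Qed.

Lemma sg_cesaro a : sg a -> sg (cesaro a).
Proof.
  intros Ha. apply (sg_le _ (Hs a) 1). apply sg_psum; auto. lra.
  intros n. unfold cesaro. rewrite Cmod_mult, Cmod_R. unfold Hs.
  rewrite Rabs_pos_eq by (left; apply Rinv_0_lt_compat, lt_0_INR; lia).
  pose proof (Cmod_ge_0 (sum_n a n)).
  assert (/ INR (S n) <= 1). { rewrite <- Rinv_1. apply Rinv_le_contravar. lra. rewrite S_INR. pose proof (pos_INR n). lra. }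
  nra.
Qed.

Lemma gprime_bound al a S z gz : 1 < al -> 0 <= S -> sg a -> 0 < Cmod z < 1 ->
  (forall v w, Cmod v < 1 -> is_pseries (dcoef a) v w -> Rpower (1 - Cmod v ^ 2) al * Cmod w <= S) ->
  is_pseries (dcoef (cesaro a)) z gz ->
  Cmod z * Cmod gz <= S / (al - 1) * (Rpower (1 - Cmod z) (- al) - 1)
     + (Cmod (a O) - S / (al - 1)) * (/ (1 - Cmod z) - 1).
Proof.
  intros Hal HS0 Ha Hz HS Hg. set (r := Cmod z) in *.
  set (e := dcoef (cesaro a)) in *.
  assert (He : sg e) by (apply sg_dcoef, sg_cesaro; auto).
  assert (Hb : sg (shift2 e)) by (apply sg_shift2; auto).
  pose proof (is_pseries_incr_1 _ _ _ (is_pseries_incr_1 _ _ _ Hg)) as Hl.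
  assert (Hl' : is_pseries (shift2 e) z (scal z (scal z gz))).
  { eapply is_pseries_ext. 2: exact Hl. intros [|[|m]]; reflexivity. }
  set (c1 := S / (al - 1)). set (c2 := Cmod (a O) - S / (al - 1)).
  set (G := fun t => r * (c1 * Rpower (1 - t * r) (- al) + c2 * Rpower (1 - t * r) (- (1)))).
  set (dG := fun t => r * (c1 * (- al * Rpower (1 - t * r) (- al - 1) * - r) + c2 * (- (1) * Rpower (1 - t * r) (- (1) - 1) * - r))).
  assert (Hmain : Cmod (Cminus (scal z (scal z gz)) (shift2 e O)) <= G 1 - G 0).
  { apply norm_via_re. intros v Hv. apply (ray_bound (shift2 e) z v _ G dG Hb (proj2 Hz) Hl').
    - intros t Ht. assert (t * r <= 1 * r) by (apply Rmult_le_compat_r; lra).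
      assert (0 < 1 - t * r) by lra. unfold G, dG.
      apply (is_derive_scal _ t r).
      apply is_derive_plusR; apply is_derive_scal; apply rp_lin_deriv; auto.
    - intros t X Ht HX.
      assert (t * r <= 1 * r) by (apply Rmult_le_compat_r; lra).
      assert (Htz : Cmod (Cmult (RtoC t) z) < 1). { rewrite Cmod_tz by lra. fold r. lra. }
      destruct (sg_ex (dcoef (Hs a)) _ (sg_dcoef _ (sg_psum _ Ha)) Htz) as [Y HY].
      assert (HX2 : is_pseries (dcoef (shift2 e)) (Cmult (RtoC t) z) (scal (Cmult (RtoC t) z) Y)).
      { eapply is_pseries_ext. 2: apply (is_pseries_incr_1 (K:=C_AbsRing) (V:=C_NormedModule) (dcoef (Hs a))); exact HY. intros m. symmetry. apply ident3. }
      rewrite (ps_unique _ _ _ _ HX HX2).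
      eapply Rle_trans. apply re_le_mod3; auto.
      change (Cmod (Cmult (Cmult (RtoC t) z) Y)) with (Cmod (Cmult (Cmult (RtoC t) z) Y)).
      rewrite Cmod_mult, Cmod_tz by lra. fold r.
      pose proof (hprime_bound al a S _ Y Hal HS0 Ha Htz HS HY) as HB.
      rewrite Cmod_tz in HB by lra. fold r in HB.
      set (d := 1 - t * r) in *. assert (Hd : 0 < d) by (unfold d; lra).
      fold c1 c2 in HB.
      assert (E : dG t = r * r / (d * d) * (S * al / (al - 1) * d * Rpower d (- al) + c2)).
      { unfold dG. fold d. rewrite (rp_m1 d (- al)), (rp_m1 d (- (1))), (Rpower_Ropp d 1), (Rpower_1 d) by auto. unfold c1. field. split; lra. }
      rewrite E. pose proof (Cmod_ge_0 Y). pose proof (Cmod_ge_0 z).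
      apply Rle_trans with (r * r * Cmod Y).
      { assert (0 <= r * Cmod Y) by (apply Rmult_le_pos; auto). 
        replace (r * (t * r * Cmod Y)) with (t * (r * (r * Cmod Y))) by ring.
        assert (0 <= r * (r * Cmod Y)) by (apply Rmult_le_pos; auto). nra. }
      assert (d ^ 2 * Cmod Y <= S * al / (al - 1) * d * Rpower d (- al) + c2) by exact HB.
      set (Q := S * al / (al - 1) * d * Rpower d (- al) + c2) in *.
      assert (HQ : Cmod Y <= Q / (d * d)).
      { apply Rle_div_r. nra. simpl in H2. nra. }
      replace (r * r / (d * d) * Q) with (r * r * (Q / (d * d))) by (field; lra).
      apply Rmult_le_compat_l; [nra | auto]. }
  unfold G in Hmain. rewrite Rmult_1_l, Rmult_0_l, Rminus_0_r, !rp_one in Hmain.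
  rewrite (Rpower_Ropp (1 - r) 1), Rpower_1 in Hmain by lra.
  replace (Cminus (scal z (scal z gz)) (shift2 e O)) with (Cmult z (Cmult z gz)) in Hmain.
  2: { simpl. change (@eq C (Cmult z (Cmult z gz)) (Cminus (Cmult z (Cmult z gz)) (RtoC 0))). ring. }
  rewrite !Cmod_mult in Hmain. fold r in Hmain. fold c1. change (Cmod (a O) - c1) with c2.
  apply (Rmult_le_reg_l r). lra. 
  replace (r * (c1 * (Rpower (1 - r) (- al) - 1) + c2 * (/ (1 - r) - 1))) with
    (r * (c1 * Rpower (1 - r) (- al) + c2 * / (1 - r)) - r * (c1 * 1 + c2 * 1)) by ring.
  exact Hmain.
Qed.

Definition Mb (alpha : R) : R :=
  if Rle_dec alpha 2
  then Rmax (constA alpha) (Rpower 2 alpha / (alpha - 1))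
  else Rmax (constA alpha) (Rpower 2 alpha * (Rpower 2 alpha - alpha - 1) / (alpha - 1) ^ 2).

Definition Kc (a : R) := Rpower (2 / (2 * a - 1)) (2 * a - 1) * Rpower a a * Rpower (a - 1) (a - 1).

Lemma Kc_ge1 a : 1 < a -> 1 <= Kc a.
Proof.
  intros. pose proof (constK_bound a 0 H ltac:(lra)). unfold Kc.
  replace (1 + 0) with 1 in H0 by ring. replace (1 - 0) with 1 in H0 by ring.
  rewrite !rp_one in H0. lra.
Qed.

Lemma two_pow a : 2 <= a -> 2 * a <= Rpower 2 a.
Proof.
  intros. replace a with (2 + (a - 2)) at 2 by ring. rewrite Rpower_plus.
  assert (E : Rpower 2 (INR 2) = 4) by (rewrite Rpower_pow by lra; simpl; ring).
  replace (INR 2) with 2 in E by (simpl; ring). rewrite E.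
  unfold Rpower. pose proof (exp_ineq1_le ((a - 2) * ln 2)). pose proof ln_lt_2. nra.
Qed.

Lemma Mb_ge a : 1 < a -> 1 + Kc a <= Mb a /\ Rpower 2 a / (a - 1) <= Mb a.
Proof.
  intros Ha. unfold Mb, constA. fold (Kc a). destruct (Rle_dec a 2).
  - split. apply Rmax_l. apply Rmax_r.
  - split. apply Rmax_l. eapply Rle_trans. 2: apply Rmax_r.
    pose proof (two_pow a ltac:(lra)). pose proof (rp_pos 2 a).
    apply Rle_div_l. lra. unfold Rdiv. 
    replace (Rpower 2 a * (Rpower 2 a - a - 1) * / (a - 1) ^ 2 * (a - 1)) with
      (Rpower 2 a * ((Rpower 2 a - a - 1) / (a - 1))) by (field; lra).
    rewrite <- (Rmult_1_r (Rpower 2 a)) at 1. apply Rmult_le_compat_l. lra.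
    apply Rle_div_r; lra.
Qed.

Lemma T_bound al r : 1 < al -> 0 < r < 1 ->
  Rpower (1 + r) al * (1 - Rpower (1 - r) (al - 1)) <= Rpower 2 al * r.
Proof.
  intros Hal Hr. pose proof (A2 (1 - r) (al - 1) ltac:(lra) ltac:(lra)) as H.
  replace (al - 1 + 1) with al in H by ring. replace (1 - (1 - r) / 2) with ((1 + r) / 2) in H by field.
  replace (1 - (1 - r)) with r in H by ring.
  replace (1 + r) with (2 * ((1 + r) / 2)) at 1 by field.
  rewrite <- Rpower_mult_distr by lra. pose proof (rp_pos 2 al).
  rewrite Rmult_assoc. apply Rmult_le_compat_l; lra.
Qed.

Lemma point_bound al a S z gz : 1 < al -> 0 <= S -> Cmod (a O) + S <= 1 -> sg a -> Cmod z < 1 ->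
  (forall v w, Cmod v < 1 -> is_pseries (dcoef a) v w -> Rpower (1 - Cmod v ^ 2) al * Cmod w <= S) ->
  is_pseries (dcoef (cesaro a)) z gz ->
  Cmod (a O) + Rpower (1 - Cmod z ^ 2) al * Cmod gz <= Mb al.
Proof.
  intros Hal HS0 H1 Ha Hz HS Hg.
  destruct (Mb_ge al Hal) as [M1 M2]. pose proof (Kc_ge1 al Hal).
  pose proof (Cmod_ge_0 (a O)). pose proof (Cmod_ge_0 gz).
  destruct (Req_dec (Cmod z) 0) as [Hz0|Hz0].
  - apply Cmod_eq_0 in Hz0. subst z.
    pose proof (is_pseries_0 (K := C_AbsRing) (V := C_NormedModule) (dcoef (cesaro a))) as H5.
    rewrite (ps_unique _ _ _ _ Hg H5).
    pose proof (HS _ _ ltac:(rewrite Cmod_0; lra) (is_pseries_0 (K := C_AbsRing) (V := C_NormedModule) (dcoef a))) as H6.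
    rewrite Cmod_0 in *. replace (1 - 0 ^ 2) with 1 by ring. rewrite rp_one.
    replace (1 - 0 ^ 2) with 1 in H6 by ring. rewrite rp_one in H6.
    unfold dcoef, cesaro in *. rewrite !Cmod_mult, !Cmod_R in *.
    replace (Rabs (INR 1)) with 1 in * by (simpl; rewrite Rabs_R1; auto).
    change (sum_n a 1) with (Hs a 1). rewrite Hs_S, Hs_0.
    pose proof (Cmod_triangle (a O) (a 1%nat)).
    replace (Rabs (/ INR 2)) with (/ 2) by (simpl; rewrite Rabs_pos_eq; lra).
    lra.
  - set (r := Cmod z) in *. pose proof (Cmod_ge_0 z).
    assert (Hr : 0 < r < 1) by (unfold r in *; lra).
    pose proof (gprime_bound al a S z gz Hal HS0 Ha Hr HS Hg) as HG. fold r in HG.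
    set (u := 1 - r) in *. set (Q1 := Rpower u (al - 1)). set (T := Rpower (1 + r) al).
    assert (Hu : 0 < u < 1) by (unfold u; lra).
    assert (HQ1 : 0 < Q1) by apply rp_pos. assert (HT : 0 < T) by apply rp_pos.
    assert (E1 : Rpower (1 - r ^ 2) al = T * (u * Q1)).
    { unfold T, Q1. replace (u * Rpower u (al - 1)) with (Rpower u al).
      rewrite Rpower_mult_distr by lra. f_equal. unfold u; ring.
      replace al with (1 + (al - 1)) at 1 by ring. rewrite Rpower_plus, Rpower_1; lra. }
    assert (E2 : Rpower u (- al) = / (u * Q1)).
    { rewrite Rpower_Ropp. f_equal. unfold Q1.
      replace al with (1 + (al - 1)) at 1 by ring. rewrite Rpower_plus, Rpower_1; lra. }
    rewrite E2 in HG. rewrite E1.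
    pose proof (constK_bound al r Hal ltac:(lra)) as K1. fold T u Q1 (Kc al) in K1.
    pose proof (T_bound al r Hal Hr) as K2. fold T u Q1 in K2.
    set (c1 := S / (al - 1)) in *. assert (Hc1 : 0 <= c1) by (unfold c1; apply Rdiv_le_0_compat; lra).
    assert (Hmain : r * (T * (u * Q1) * Cmod gz) <= r * (Cmod (a O) * (T * Q1)) + c1 * (T * (1 - Q1))).
    { replace (r * (T * (u * Q1) * Cmod gz)) with (T * (u * Q1) * (r * Cmod gz)) by ring.
      eapply Rle_trans. apply Rmult_le_compat_l. 
      apply Rmult_le_pos; [lra | apply Rmult_le_pos; lra]. exact HG.
      apply Req_le. unfold u. field. split; lra. }
    assert (Hm2 : T * (u * Q1) * Cmod gz <= Cmod (a O) * Kc al + c1 * Rpower 2 al).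
    { apply (Rmult_le_reg_l r). lra. eapply Rle_trans. exact Hmain.
      assert (r * (Cmod (a O) * (T * Q1)) <= r * (Cmod (a O) * Kc al)).
      { apply Rmult_le_compat_l. lra. apply Rmult_le_compat_l; lra. }
      assert (c1 * (T * (1 - Q1)) <= c1 * (Rpower 2 al * r)) by (apply Rmult_le_compat_l; lra).
      nra. }
    assert (Hfin : Cmod (a O) * (1 + Kc al) + S * (Rpower 2 al / (al - 1)) <= Mb al * (Cmod (a O) + S)).
    { assert (Cmod (a O) * (1 + Kc al) <= Cmod (a O) * Mb al) by (apply Rmult_le_compat_l; lra).
      assert (S * (Rpower 2 al / (al - 1)) <= S * Mb al) by (apply Rmult_le_compat_l; lra).
      nra. }
    assert (0 <= Mb al) by lra.
    assert (Mb al * (Cmod (a O) + S) <= Mb al) by nra.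
    assert (c1 * Rpower 2 al = S * (Rpower 2 al / (al - 1))) by (unfold c1; field; lra).
    nra.
Qed.

Lemma lub_ub (E : Rbar -> Prop) x : E x -> Rbar_le x (Rbar_lub E).
Proof. intros. unfold Rbar_lub. destruct (Rbar_ex_lub E) as [l [Hu Hl]]. simpl. apply Hu. auto. Qed.

Lemma lub_least (E : Rbar -> Prop) b : (forall x, E x -> Rbar_le x b) -> Rbar_le (Rbar_lub E) b.
Proof. intros. unfold Rbar_lub. destruct (Rbar_ex_lub E) as [l [Hu Hl]]. simpl. apply Hl. auto. Qed.

Lemma cesaro_0 a : cesaro a O = a O.
Proof. unfold cesaro. rewrite sum_O. simpl. rewrite Rinv_1. change (@eq C (Cmult (RtoC 1) (a O)) (a O)). ring. Qed.

Theorem theorem6p2 (alpha : R) (halpha : 1 < alpha) :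
  Rbar_le (cesaro_opnorm alpha)
    (Finite (if Rle_dec alpha 2
             then Rmax (constA alpha) (Rpower 2 alpha / (alpha - 1))
             else Rmax (constA alpha)
                    (Rpower 2 alpha * (Rpower 2 alpha - alpha - 1) / (alpha - 1) ^ 2))).
Proof.
  change (Rbar_le (cesaro_opnorm alpha) (Finite (Mb alpha))).
  unfold cesaro_opnorm. apply lub_least. intros x [a [[HD Hfin] [Hle Hx]]]. subst x.
  assert (Ha : sg a) by (apply sg_of_HD; auto).
  unfold bloch_norm in Hfin, Hle.
  destruct (bloch_sup alpha a) as [S| |] eqn:ES; try (unfold is_finite in Hfin; simpl in Hfin; discriminate).
  simpl in Hle.
  assert (HS : forall v w, Cmod v < 1 -> is_pseries (dcoef a) v w -> Rpower (1 - Cmod v ^ 2) alpha * Cmod w <= S).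
  { intros v w Hv Hw. 
    assert (Rbar_le (Finite (Rpower (1 - Cmod v ^ 2) alpha * Cmod w)) (bloch_sup alpha a)).
    { unfold bloch_sup. apply lub_ub. exists v. split; auto. exists w. split; auto. }
    rewrite ES in H. simpl in H. auto. }
  assert (HS0 : 0 <= S).
  { pose proof (HS (RtoC 0) _ ltac:(rewrite Cmod_0; lra) (is_pseries_0 (K := C_AbsRing) (V := C_NormedModule) (dcoef a))).
    pose proof (rp_pos (1 - Cmod (RtoC 0) ^ 2) alpha). pose proof (Cmod_ge_0 (dcoef a O)).
    assert (0 <= Rpower (1 - Cmod (RtoC 0) ^ 2) alpha * Cmod (dcoef a O)) by (apply Rmult_le_pos; lra). lra. }
  unfold bloch_norm. rewrite cesaro_0.
  assert (Hsup : Rbar_le (bloch_sup alpha (cesaro a)) (Finite (Mb alpha - Cmod (a O)))).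
  { unfold bloch_sup. apply lub_least. intros x [z [Hz [w [Hw Hx]]]]. subst x. 
    pose proof (point_bound alpha a S z w halpha HS0 Hle Ha Hz HS Hw).
    change (Rpower (1 - Cmod z ^ 2) alpha * Cmod w <= Mb alpha - Cmod (a O)). lra. }
  destruct (bloch_sup alpha (cesaro a)) as [y| |].
  - change (Cmod (a O) + y <= Mb alpha). change (y <= Mb alpha - Cmod (a O)) in Hsup. lra.
  - contradiction.
  - exact I.

Qed.
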